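(* Let $w$ be a positive integer, $x$ an integer with $0\le x\le p-1$, and $h$ a non-negative integer. If $T_n(x)\equiv x\pmod{p^w}$ and $T'_n(x)\equiv 1\pmod{p^w}$, then $T'_n(x+hp)\equiv T'_n(x)\pmod{p^{w+1}}$ and, for every integer $m\ge 2$, $$\frac{T^{(m)}_n(x+hp)\,p^m}{m!}\equiv 0\pmod{p^{w+2}}.$$
   Context: $p$ is a prime with $p>3$ and $n>1$ is an integer with $\gcd(n,p)=\gcd(n,p^2-1)=1$. $T_n(x)\in\mathbb{Z}[x]$ is the Chebyshev polynomial of the first kind: $T_0=1$, $T_1=x$, $T_d=2xT_{d-1}-T_{d-2}$. $T^{(m)}_n$ is its $m$-th derivative, $T'_n=T^{(1)}_n$; note $T^{(m)}_n(a)/m!\in\mathbb{Z}$ for integers $a$. *)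

(* Defs.v *)
From mathcomp Require Import all_boot all_order all_algebra.
Set Implicit Arguments. Unset Strict Implicit. Unset Printing Implicit Defensive.
Import GRing.Theory Num.Theory.
Local Open Scope ring_scope.

Fixpoint cheb (d : nat) : {poly int} :=
  match d with
  | 0%N => 1
  | 1%N => 'X
  | (k.+1 as d1).+1 => 2%:P * 'X * cheb d1 - cheb k
  end.

(* Main.v *)
Require Import Defs.
From mathcomp Require Import all_boot all_order all_algebra.
From mathcomp Require Import ring zify.
Import GRing.Theory Num.Theory.


Lemma sum_div_bound (p : nat) : (0 < p)%N -> forall N m,
  ((p - 1) * \sum_(1 <= i < N.+1) m %/ p ^ i <= m)%N.
Proof.
move=> p0; elim=> [|N IH] m; first by rewrite big_geq // muln0.
rewrite big_nat_recl // expn1.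
have -> : (\sum_(1 <= i < N.+1) m %/ p ^ i.+1 = \sum_(1 <= i < N.+1) (m %/ p) %/ p ^ i)%N.
  by apply: eq_bigr => i _; rewrite expnS divnMA.
have := IH (m %/ p)%N.
have := leq_divM m p.
rewrite (mulnC (m %/ p)%N p).
nia.
Qed.

Lemma logn_fact2k (p k : nat) : prime p -> (3 < p)%N -> (2 <= k)%N ->
  (logn p (2 * k)`! <= k - 2)%N.
Proof.
move=> pp p3 k2; rewrite logn_fact //.
have p0 : (0 < p)%N by rewrite prime_gt0.
have p5 : (4 < p)%N.
  case: (p =P 4%N) => [e|ne]; first by rewrite e in pp.
  lia.
have := @sum_div_bound p p0 (2 * k) (2 * k).
set S := (\sum_(_ <= _ < _) _)%N.
case: (ltnP k 3) => [k3 | k3 ].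
  have -> : k = 2%N by lia.
  have -> : S = 0%N.
    rewrite /S big_nat_cond big1 // => i /andP [/andP [i1 _] _].
    apply: divn_small; apply: (@leq_trans p); first by lia.
    by rewrite -{1}(expn1 p) leq_exp2l; lia.
  done.
nia.
Qed.

Lemma valL (p c k M a : nat) : prime p -> (3 < p)%N -> (2 <= k)%N ->
  (M %| (2 * k)`!)%N -> (p ^ (c + k) %| a * M)%N -> (p ^ (c + 2) %| a)%N.
Proof.
move=> pp p3 k2 dM H.
have M0 : (0 < M)%N by apply: dvdn_gt0 dM; apply: fact_gt0.
have [M' cop eM] := pfactor_coprime pp M0.
set e := logn p M in eM.
have le : (e <= k - 2)%N.
  have := @logn_fact2k p k pp p3 k2; have := dvdn_leq_log p (fact_gt0 _) dM.
  rewrite /e; lia.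
have H2 : (p ^ (c + 2) * p ^ e %| (a * M') * p ^ e)%N.
  rewrite -expnD -mulnA -eM; apply: dvdn_trans H.
  by apply: dvdn_exp2l; lia.
rewrite dvdn_pmul2r ?expn_gt0 ?prime_gt0 // in H2.
by rewrite Gauss_dvdl // in H2; rewrite coprime_sym coprimeXr // coprime_sym.
Qed.

Local Open Scope ring_scope.

Local Notation T := cheb.

Lemma chebSS d : T d.+2 = 2%:P * 'X * T d.+1 - T d.
Proof. by []. Qed.

Lemma derivT d : (T d.+2)^`() = 2%:P * T d.+1 + 2%:P * 'X * (T d.+1)^`() - (T d)^`().
Proof. by rewrite chebSS derivB !derivM derivC derivX; ring. Qed.

Lemma eq_lin (R : comRingType) (a b : R) : a = b -> a - b = 0.
Proof. by move=> ->; rewrite subrr. Qed.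

Lemma chebA e : (1 - 'X * 'X) * (T e.+1)^`() = (T e - 'X * T e.+1) *+ e.+1.
Proof.
have H : forall e, (1 - 'X * 'X) * (T e.+1)^`() = (T e - 'X * T e.+1) *+ e.+1 /\
   (1 - 'X * 'X) * (T e.+2)^`() = (T e.+1 - 'X * T e.+2) *+ e.+2.
  elim=> [|d [IH1 IH2]].
    split; first by rewrite /= derivX; ring.
    rewrite derivT /= derivX derivC; ring.
  split=> //.
  move/eq_lin: IH1 => IH1; move/eq_lin: IH2 => IH2.
  apply/eqP; rewrite -subr_eq0; apply/eqP.
  rewrite derivT.
  have -> : T d.+3 = 2%:P * 'X * T d.+2 - T d.+1 by [].
  move: IH1 IH2; rewrite (_ : T d = 2%:P * 'X * T d.+1 - T d.+2); last by rewrite chebSS; ring.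
  move=> IH1 IH2.
  have -> : (1 - 'X * 'X) * (2%:P * T d.+2 + 2%:P * 'X * (T d.+2)^`() - (T d.+1)^`()) -
   (T d.+2 - 'X * (2%:P * 'X * T d.+2 - T d.+1)) *+ d.+3
   = 2%:P * 'X * ((1 - 'X * 'X) * (T d.+2)^`() - (T d.+1 - 'X * T d.+2) *+ d.+2)
     - ((1 - 'X * 'X) * (T d.+1)^`() - (2%:P * 'X * T d.+1 - T d.+2 - 'X * T d.+1) *+ d.+1)
     by ring.
  by rewrite IH1 IH2; ring.
by case: (H e).
Qed.

Lemma chebB e : (1 - 'X * 'X) * (T e)^`() = ('X * T e - T e.+1) *+ e.
Proof.
case: e => [|d]; first by rewrite /= derivC mulr0 mulr0n.
rewrite chebA; congr (_ *+ _); rewrite chebSS; ring.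
Qed.

Lemma oneX2_neq0 : (1 - 'X * 'X : {poly int}) != 0.
Proof.
apply/negP => /eqP H; have := congr1 (fun q => q.[0]) H.
by rewrite !hornerE.
Qed.

Lemma chebODE d : (1 - 'X * 'X) * (T d)^`()^`() - 'X * (T d)^`() + T d *+ (d * d) = 0.
Proof.
case: d => [|e]; first by rewrite /= derivC derivC; ring.
apply: (@mulfI _ (1 - 'X * 'X)); first exact: oneX2_neq0.
rewrite mulr0.
have E1 := congr1 deriv (chebA e).
rewrite derivM derivMn derivB derivM derivX derivB derivM derivX derivC in E1.
move/eq_lin: E1 => E1.
have A := eq_lin _ _ _ (chebA e).
have B := eq_lin _ _ _ (chebB e).
set L1 := (X in X = 0) in E1.
set L2 := (X in X = 0) in A.
set L3 := (X in X = 0) in B.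
have -> : (1 - 'X * 'X) * ((1 - 'X * 'X) * (T e.+1)^`()^`() - 'X * (T e.+1)^`() + T e.+1 *+ (e.+1 * e.+1))
   = (1 - 'X * 'X) * L1 + L3 *+ e.+1 - 'X * L2 *+ e.
  rewrite /L1 /L2 /L3; ring.
by rewrite E1 A B; ring.
Qed.

Lemma chebODEn d k :
  (1 - 'X * 'X) * (T d)^`(k.+2) - 'X * (T d)^`(k.+1) *+ (2 * k).+1
   + (T d)^`(k) *+ (d * d) - (T d)^`(k) *+ (k * k) = 0.
Proof.
elim: k => [|k IH].
  rewrite !derivnS derivn0 -(chebODE d); ring.
have := congr1 deriv IH.
rewrite !(deriv0, derivB, derivD, derivMn, derivMNn, derivM, derivX, derivC).
rewrite -!derivnS => <-.
have -> : (2 * k.+1).+1 = ((2 * k).+1 + 2)%N by rewrite mulnS; lia.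
have -> : (k.+1 * k.+1 = k * k + (2 * k).+1)%N by lia.
ring.
Qed.

Lemma chebQ e : T e * T e - 2%:P * 'X * T e * T e.+1 + T e.+1 * T e.+1 = 1 - 'X * 'X.
Proof.
elim: e => [|e IH]; first by rewrite /=; ring.
rewrite -IH chebSS; ring.
Qed.

Lemma chebPell e : (1 - 'X * 'X) * ((T e)^`() * (T e)^`()) = (1 - T e * T e) *+ (e * e).
Proof.
apply: (@mulfI _ (1 - 'X * 'X)); first exact: oneX2_neq0.
have B := chebB e.
have Q := eq_lin _ _ _ (chebQ e).
have -> : (1 - 'X * 'X) * ((1 - 'X * 'X) * ((T e)^`() * (T e)^`())) =
  ((1 - 'X * 'X) * (T e)^`()) * ((1 - 'X * 'X) * (T e)^`()) by ring.
rewrite B.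
set L := (X in X = 0) in Q.
have -> : (('X * T e - T e.+1) *+ e) * (('X * T e - T e.+1) *+ e) =
  (1 - 'X * 'X) * (1 - T e * T e) *+ (e * e) + L *+ (e * e) by rewrite /L; ring.
by rewrite Q; ring.
Qed.

Lemma cheb_pm1 (z : int) e : z * z = 1 ->
  (T e).[z] = z ^+ e /\ (T e)^`().[z] = z ^+ e.+1 * (e * e)%:R.
Proof.
move=> hz.
have hz' : z = 1 \/ z = -1.
  by move/eqP: hz; rewrite -expr2 sqrf_eq1 => /orP [/eqP|/eqP]; [left|right].
have H : forall e, ((T e).[z] = z ^+ e /\ (T e)^`().[z] = z ^+ e.+1 * (e * e)%:R) /\
    ((T e.+1).[z] = z ^+ e.+1 /\ (T e.+1)^`().[z] = z ^+ e.+2 * (e.+1 * e.+1)%:R).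
  elim=> [|d [[H1 H2] [IH1 IH2]]].
    rewrite /= derivC derivX !hornerE /=; split; split; try ring.
    by rewrite expr2 hz.
  split; first by split.
  rewrite derivT chebSS !hornerE IH1 IH2 H1 H2 !exprS.
  have -> : (d.+2 * d.+2 = d * d + 4 * d + 4)%N by lia.
  have -> : (d.+1 * d.+1 = d * d + 2 * d + 1)%N by lia.
  rewrite !natrD !natrM.
  by case: hz' => ->; split; ring.
by case: (H e).
Qed.

Lemma ode_at n k (z : int) :
  (1 - z * z) * (T n)^`(k.+2).[z] - z * (T n)^`(k.+1).[z] *+ (2 * k).+1
   + (T n)^`(k).[z] *+ (n * n) - (T n)^`(k).[z] *+ (k * k) = 0.
Proof.
have := congr1 (fun q => q.[z]) (chebODEn n k).
by rewrite /= !(hornerE, hornerMn).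
Qed.

Lemma t_a n k (z : int) : (T n)^`(k).[z] = (T n)^`N(k).[z] *+ k`!.
Proof. by rewrite nderivn_def hornerMn. Qed.

Lemma comp_nderiv (q : {poly int}) m j :
  (q^`N(m))^`N(j) = q^`N(m + j) *+ 'C(m + j, m).
Proof.
apply/polyP => i; rewrite coefMn !coef_nderivn -!mulrnA -addnA.
congr (_ *+ _).
apply/eqP; rewrite -(@eqn_pmul2r (m`! * j`! * i`!)); last by rewrite !muln_gt0 !fact_gt0.
have e1 := @bin_fact (m + (j + i)) m (leq_addr _ _).
have e2 := @bin_fact (j + i) j (leq_addr _ _).
have e3 := @bin_fact (m + j + i) (m + j) (leq_addr _ _).
have e4 := @bin_fact (m + j) m (leq_addr _ _).
rewrite addKn in e1; rewrite addKn in e2; rewrite addKn in e3; rewrite addKn in e4.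
rewrite -addnA in e3.
apply/eqP.
have -> : ('C(m + (j + i), m) * 'C(j + i, j) * (m`! * j`! * i`!) =
   'C(m + (j + i), m) * (m`! * ('C(j + i, j) * (j`! * i`!))))%N by ring.
have -> : ('C(m + (j + i), m + j) * 'C(m + j, m) * (m`! * j`! * i`!) =
   'C(m + (j + i), m + j) * (('C(m + j, m) * (m`! * j`!)) * i`!))%N by ring.
by rewrite e2 e4 e1 -e3 mulnA.
Qed.

Definition good n p c (z : int) := forall k, (2 <= k)%N ->
  ((p%:Z) ^+ (c + 2) %| (T n)^`N(k).[z] * (p%:Z) ^+ k)%Z.

Lemma good_shift n p c z h : good n p c z -> good n p c (z + h%:Z * p%:Z).
Proof.
move=> G m m2.
rewrite (nderiv_taylor _ (mulrC _ _)) big_distrl /=.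
apply: rpred_sum => j _.
rewrite comp_nderiv hornerMn.
have -> : (T n)^`N(m + j).[z] *+ 'C(m + j, m) * (h%:Z * p%:Z) ^+ j * p%:Z ^+ m =
  ((T n)^`N(m + j).[z] * p%:Z ^+ (m + j)) * (h%:Z ^+ j *+ 'C(m + j, m)).
  by rewrite exprMn exprD; ring.
apply: dvdz_mulr; apply: G; lia.
Qed.

Lemma good_deriv n p c z h : (0 < p)%N -> good n p c z ->
  ((p%:Z) ^+ (c + 1) %| (T n)^`().[z + h%:Z * p%:Z] - (T n)^`().[z])%Z.
Proof.
move=> p0 G.
rewrite -nderivn1.
rewrite (@nderiv_taylor_wide _ (size (T n)^`N(1)).+1 _ _ _ (mulrC _ _) (leqnSn _)).
rewrite big_ord_recl /= nderivn0 expr0 mulr1 addrC addKr.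
apply: rpred_sum => j _.
rewrite comp_nderiv hornerMn.
set j' := bump 0 j.
have G' := G (1 + j')%N ltac:(rewrite /j' /bump /=; lia).
have : ((p%:Z) ^+ (c + 1) * p%:Z %| ((T n)^`N(1 + j').[z] * p%:Z ^+ j') * p%:Z)%Z.
  have e1 : (c + 1).+1 = (c + 2)%N by lia.
  have e2 : j'.+1 = (1 + j')%N by lia.
  by rewrite -exprSr -mulrA -exprSr e1 e2.
have pz : p%:Z != 0 by rewrite eqz_nat; lia.
rewrite dvdz_mul2r //.
move=> H.
have -> : (T n)^`N(1 + j').[z] *+ 'C(1 + j', 1) * (h%:Z * p%:Z) ^+ j' =
  ((T n)^`N(1 + j').[z] * p%:Z ^+ j') * (h%:Z ^+ j' *+ 'C(1 + j', 1)).
  by rewrite exprMn; ring.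
exact: dvdz_mulr.
Qed.

Lemma valZ p c k M (a : int) : prime p -> (3 < p)%N -> (2 <= k)%N ->
  (M %| (2 * k)`!)%N -> ((p%:Z) ^+ (c + k) %| a * M%:Z)%Z -> ((p%:Z) ^+ (c + 2) %| a)%Z.
Proof.
move=> pp p3 k2 dM; rewrite !dvdzE !abszX abszM !absz_nat.
exact: valL.
Qed.

Definition Pi k := (\prod_(2 <= j < k) (2 * j + 1))%N.

Lemma Mdiv k : (2 <= k)%N -> (k`! * Pi k %| (2 * k)`!)%N.
Proof.
elim: k => [|k IH] //; rewrite ltnS leq_eqVlt => /orP [/eqP <- | k1].
  by rewrite /Pi big_geq.
rewrite /Pi big_nat_recr //= -/(Pi k) factS.
have -> : (2 * k.+1 = (2 * k).+2)%N by lia.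
rewrite !factS.
have -> : (k.+1 * k`! * (Pi k * (2 * k + 1)) = (k`! * Pi k) * ((2 * k + 1) * k.+1))%N by ring.
have -> : ((2 * k).+2 * ((2 * k).+1 * (2 * k)`!) = (2 * k)`! * (((2 * k).+1 * k.+1) * 2))%N by ring.
apply: dvdn_mul; first exact: IH.
rewrite addn1; exact: dvdn_mulr.
Qed.

Lemma coprime_p3 p : prime p -> (3 < p)%N -> coprimez (p%:Z) 3.
Proof.
move=> pp p3; rewrite coprimezE /= prime_coprime //.
by apply/negP => /dvdn_leq; lia.
Qed.

Lemma lincomb (R : comRingType) (E X Y c : R) : E = 0 -> X - Y = c * E -> X = Y.
Proof. by move=> -> /eqP; rewrite mulr0 subr_eq0 => /eqP. Qed.

Lemma good_pm1 n p u (z : int) : prime p -> (3 < p)%N -> z * z = 1 ->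
  ((p%:Z) ^+ u %| (n * n)%:R - 1)%Z -> good n p u z.
Proof.
move=> pp p3 hz hu.
set P := p%:Z.
have claim : forall k, (2 <= k)%N ->
    (P ^+ (u + k) %| (T n)^`(k).[z] * P ^+ k * (Pi k)%:R)%Z.
  elim=> [|k IH] //; rewrite ltnS leq_eqVlt => /orP [/eqP <- | k1].
    have O := ode_at n 1 z.
    rewrite hz subrr mul0r sub0r in O.
    have H3 : (T n)^`(2).[z] * 3 = z * ((T n)^`(1).[z] * ((n * n)%:R - 1)).
      have -> : (T n)^`(2).[z] * 3 = z * z * ((T n)^`(2).[z] *+ 3) by rewrite hz; ring.
      rewrite -mulrA; congr (_ * _).
      apply: (@lincomb _ _ _ _ (-1) O); ring.
    have : (P ^+ u %| (T n)^`(2).[z] * 3)%Z.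
      by rewrite H3; apply: dvdz_mull; apply: dvdz_mull.
    rewrite Gauss_dvdzl; last by apply: coprimezXl; apply: coprime_p3.
    move=> H; rewrite /Pi big_geq // mulr1 exprD.
    by apply: dvdz_mul.
  have O := ode_at n k z.
  rewrite hz subrr mul0r sub0r in O.
  have Hk : (T n)^`(k.+1).[z] *+ (2 * k).+1 = z * ((T n)^`(k).[z] * ((n * n)%:R - (k * k)%:R)).
    have -> : (T n)^`(k.+1).[z] *+ (2 * k).+1 = z * z * ((T n)^`(k.+1).[z] *+ (2 * k).+1) by rewrite hz mul1r.
    rewrite -mulrA; congr (_ * _).
    apply: (@lincomb _ _ _ _ (-1) O); ring.
  have -> : (T n)^`(k.+1).[z] * P ^+ k.+1 * (Pi k.+1)%:R =
     ((T n)^`(k.+1).[z] *+ (2 * k).+1) * P * (P ^+ k * (Pi k)%:R).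
    rewrite /Pi big_nat_recr //= -/(Pi k) natrM exprS addn1; ring.
  rewrite Hk.
  have -> : z * ((T n)^`(k).[z] * ((n * n)%:R - (k * k)%:R)) * P * (P ^+ k * (Pi k)%:R) =
     ((T n)^`(k).[z] * P ^+ k * (Pi k)%:R) * P * (z * ((n * n)%:R - (k * k)%:R)) by ring.
  apply: dvdz_mulr; rewrite addnS exprS mulrC; apply: dvdz_mul => //.
  exact: IH.
move=> k k2.
apply: (@valZ p u k (k`! * Pi k)) => //; first exact: Mdiv.
have := claim k k2; rewrite t_a.
suff -> : (T n)^`N(k).[z] * P ^+ k * ((k`! * Pi k)%N : int) = (T n)^`N(k).[z] *+ k`! * P ^+ k * (Pi k)%:R by [].
rewrite -[((k`! * Pi k)%N : int)]natz natrM -[_ *+ k`!]mulr_natr; ring.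
Qed.

Lemma good_A n p w (x : int) : prime p -> (3 < p)%N -> coprimez (p%:Z) (1 - x * x) ->
  ((p%:Z) ^+ w %| (T n).[x] - x)%Z -> ((p%:Z) ^+ w %| (T n)^`().[x] - 1)%Z ->
  good n p w x.
Proof.
move=> pp p3 cop h0 h1.
set P := p%:Z.
have copw : coprimez (P ^+ w) (1 - x * x) by apply: coprimezXl.
set t := fun k => (T n)^`(k).[x].
have t0 : t 0%N = (T n).[x] by rewrite /t derivn0.
have t1 : t 1%N = (T n)^`().[x] by rewrite /t derivn1.
have hn : (P ^+ w %| (n * n)%:R - 1)%Z.
  have Pe : (1 - x * x) * ((T n)^`().[x] * (T n)^`().[x]) = (1 - (T n).[x] * (T n).[x]) *+ (n * n).
    have := congr1 (fun q => q.[x]) (chebPell n).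
    by rewrite /= !(hornerE, hornerMn) => H; exact H.
  move/eq_lin: Pe => Pe.
  have E : (1 - x * x) * (1 - (n * n)%:R) = (1 - x * x) * ((1 - (T n)^`().[x]) * (1 + (T n)^`().[x]))
     + (n * n)%:R * ((x - (T n).[x]) * (x + (T n).[x])).
    apply: (@lincomb _ _ _ _ 1 Pe); ring.
  have : (P ^+ w %| (1 - x * x) * (1 - (n * n)%:R))%Z.
    rewrite E; apply: rpredD; apply: dvdz_mull; apply: dvdz_mulr.
      by rewrite -opprB rpredN.
    by rewrite -opprB rpredN.
  by rewrite Gauss_dvdzr // -opprB rpredN.
have base2 : (P ^+ w %| t 2%N)%Z.
  have O := ode_at n 0 x; rewrite derivn0 in O.
  have E : (1 - x * x) * t 2%N = x * ((T n)^`().[x] - 1) - (n * n)%:R * ((T n).[x] - x) - x * ((n * n)%:R - 1).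
    apply: (@lincomb _ _ _ _ 1 O); rewrite /t derivn1; ring.
  have : (P ^+ w %| (1 - x * x) * t 2%N)%Z.
    rewrite E; apply: rpredB; [apply: rpredB|]; by apply: dvdz_mull.
  by rewrite Gauss_dvdzr.
have base3 : (P ^+ w %| t 3%N)%Z.
  have O := ode_at n 1 x.
  have E : (1 - x * x) * t 3%N = x * t 2%N *+ 3 - t 1%N * ((n * n)%:R - 1).
    apply: (@lincomb _ _ _ _ 1 O); rewrite /t; ring.
  have : (P ^+ w %| (1 - x * x) * t 3%N)%Z.
    rewrite E; apply: rpredB; first by apply: rpredMn; apply: dvdz_mull.
    by apply: dvdz_mull.
  by rewrite Gauss_dvdzr.
have all : forall k, (P ^+ w %| t k.+2)%Z /\ (P ^+ w %| t k.+3)%Z.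
  elim=> [|k [IH1 IH2]]; first by split.
  split=> //.
  have O := ode_at n k.+2 x.
  have E : (1 - x * x) * t k.+4 = x * t k.+3 *+ (2 * k.+2).+1 - t k.+2 * ((n * n)%:R - (k.+2 * k.+2)%:R).
    apply: (@lincomb _ _ _ _ 1 O); rewrite /t; ring.
  have : (P ^+ w %| (1 - x * x) * t k.+4)%Z.
    rewrite E; apply: rpredB; first by apply: rpredMn; apply: dvdz_mull.
    by apply: dvdz_mulr.
  by rewrite Gauss_dvdzr.
move=> k k2.
apply: (@valZ p w k (k`!)) => //.
  by apply: (@dvdn_trans (k`! * Pi k)); [apply: dvdn_mulr | exact: Mdiv].
have : (P ^+ w %| t k)%Z.
  by case: k k2 => [|[|k]] // _; case: (all k).
rewrite /t t_a exprD => H.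
have -> : (T n)^`N(k).[x] * P ^+ k * (k`!)%:Z = ((T n)^`N(k).[x] *+ k`!) * P ^+ k.
  by rewrite -natz -mulr_natr; ring.
exact: dvdz_mul.
Qed.

Lemma PX p k : (p ^ k)%:Z = (p%:Z) ^+ k.
Proof. by rewrite -[LHS]natz natrX natz. Qed.

Lemma n_odd n p : prime p -> (3 < p)%N -> coprime n (p ^ 2 - 1) -> odd n.
Proof.
move=> pp p3 cn; apply/negPn/negP => ev.
have podd : odd p by case: (even_prime pp) => // e; lia.
have d2 : (2 %| p ^ 2 - 1)%N.
  apply/dvdnP; exists (2 * (p./2) * (p./2) + 2 * p./2)%N.
  move: (odd_double_half p); rewrite podd -muln2 => e.
  rewrite -{1}e; nia.
have d1 : (2 %| n)%N by rewrite dvdn2.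
have := coprime_dvdr d2 (coprime_dvdl d1 cn).
by [].
Qed.

Lemma copA p (x : int) : prime p -> (3 < p)%N -> 0 <= x -> x <= p%:Z - 1 ->
  x != 1 -> x != p%:Z - 1 -> coprimez (p%:Z) (1 - x * x).
Proof.
move=> pp p3 x0 xp x1 x2.
have -> : 1 - x * x = (1 - x) * (1 + x) by ring.
rewrite coprimezMr; apply/andP; split; rewrite coprimezE /= prime_coprime //;
  apply/negP; rewrite -[p in (p %| _)%N]/(`|p%:Z|%N) -dvdzE => /dvdzP [q hq].
  move: x1 => /eqP x1; case: (ltrgtP q 0) => hq0; nia.
move: x2 => /eqP x2; case: (ltrgtP q 0) => hq0; nia.
Qed.

Theorem lemma5 (p n w : nat) (x : int) (h : nat) :
  prime p -> (3 < p)%N -> (1 < n)%N ->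
  coprime n p -> coprime n (p ^ 2 - 1) ->
  (0 < w)%N -> 0 <= x -> x <= (p%:Z - 1) ->
  ((cheb n).[x] == x %[mod (p ^ w)%:Z])%Z ->
  (((cheb n)^`()).[x] == 1 %[mod (p ^ w)%:Z])%Z ->
  (((cheb n)^`()).[x + (h * p)%:Z] == ((cheb n)^`()).[x] %[mod (p ^ w.+1)%:Z])%Z
  /\ (forall m : nat, (2 <= m)%N ->
        (((cheb n)^`N(m)).[x + (h * p)%:Z] * (p ^ m)%:Z == 0 %[mod (p ^ (w + 2))%:Z])%Z).
Proof.
move=> pp p3 n1 cnp cn w0 x0 xp.
rewrite !eqz_mod_dvd !PX PoszM => h0 h1.
set P := p%:Z.
have p0 : (0 < p)%N by apply: prime_gt0.
have G : good n p w x.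
  have [x1|x1] := eqVneq x 1.
    rewrite x1; apply: good_pm1 => //.
    case: (@cheb_pm1 1 n (mulr1 1)) => _ e.
    by rewrite x1 e expr1n mul1r in h1.
  have [x2|x2] := eqVneq x (P - 1).
    have hodd := @n_odd n p pp p3 cn.
    have m1 : (-1) * (-1) = 1 :> int by rewrite mulrNN mulr1.
    case: (@cheb_pm1 (-1) n m1) => _ e.
    rewrite exprS -signr_odd hodd /= mulrNN mul1r in e.
    set u := logn p (n * n - 1)%N.
    have nn0 : (0 < n * n - 1)%N by nia.
    have cast : ((n * n - 1)%N : int) = (n * n)%:R - 1.
      by rewrite -natz natrB; [rewrite natz | nia].
    have hu : (P ^+ u %| (n * n)%:R - 1)%Z.
      by rewrite -cast -PX dvdzE /= pfactor_dvdnn.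
    have Gu := @good_pm1 n p u (-1) pp p3 m1 hu.
    have D := @good_deriv n p u (-1) 1 p0 Gu.
    rewrite mul1r (addrC (-1)) -x2 e in D.
    have wu : (w <= u)%N.
      rewrite leqNgt; apply/negP => uw.
      have : (P ^+ (u + 1) %| (T n)^`().[x] - 1)%Z.
        by apply: (dvdz_trans _ h1); apply: dvdz_exp2l; lia.
      move=> H1.
      have : (P ^+ (u + 1) %| ((T n)^`().[x] - 1) - ((T n)^`().[x] - (n * n)%:R))%Z.
        exact: rpredB.
      have -> : (T n)^`().[x] - 1 - ((T n)^`().[x] - (n * n)%:R) = (n * n)%:R - 1 by ring.
      by rewrite -cast -PX dvdzE /= pfactor_dvdn // -/u addn1 ltnn.
    have Gw : good n p w (-1).
      move=> k k2; apply: (dvdz_trans _ (Gu k k2)); apply: dvdz_exp2l; lia.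
    have := @good_shift n p w (-1) 1 Gw.
    by rewrite mul1r (addrC (-1)) -x2.
  by apply: good_A => //; apply: copA.
split.
  rewrite -addn1; exact: (@good_deriv n p w x h p0 G).
move=> m m2.
rewrite eqz_mod_dvd subr0 !PX; exact: (@good_shift n p w x h G).
Qed.
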